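(* Let $k$ be a field and $V$ an indecomposable representation of the quiver $\mathcal{S}$ over $k$, with endomorphism ring $\mathcal{E}=\operatorname{End}V$. Then: (1) If $V$ is of type 0 with dimension vector $(n,n,n,n)$ and $A_\gamma=F_n(p^s(t))$ ($p$ monic irreducible, $p(t)\neq t$, $s\deg p=n$), then $\mathcal{E}\simeq k[t]/(p^s(t))$. (2) If $V$ is of type I with dimension vector $(n,n,n,n)$, then $\mathcal{E}\simeq k[t]/(t^n)$. (3) If $V$ is of type II with dimension vector $(n+1,n,n+1,n)$, then $\mathcal{E}\simeq k[t]/(t^{n+1})$. (4) If $V$ is of type III, IV, III$^\ast$ or IV$^\ast$, then $\mathcal{E}\simeq k$.
   Context: $\mathcal{S}$ is the quiver with vertices $1,2,3,4$ and arrows $\alpha\colon 3\to 1$, $\beta\colon 3\to 2$, $\gamma\colon 4\to 1$, $\delta\colon 4\to 2$. A representation is $V=(V_1,\dots,V_4,f_\alpha,f_\beta,f_\gamma,f_\delta)$ with $f_\alpha\colon V_3\to V_1$, $f_\beta\colon V_3\to V_2$, $f_\gamma\colon V_4\to V_1$, $f_\delta\colon V_4\to V_2$ linear; an endomorphism is a tuple $(l_1,\dots,l_4)$, $l_i\colon V_i\to V_i$ linear, with $l_1f_\alpha=f_\alpha l_3$, $l_1f_\gamma=f_\gamma l_4$, $l_2f_\beta=f_\beta l_3$, $l_2f_\delta=f_\delta l_4$; $\operatorname{End}V$ is the ring of these under sum and composition. ''$V$ is of type X'' means $V$ is isomorphic to the representation with dimension vector $d$ and matrices $(A_\alpha,A_\beta,A_\gamma,A_\delta)$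 of $(f_\alpha,f_\beta,f_\gamma,f_\delta)$ (standard bases of $k^{d_i}$) as follows: Type 0: $d=(n,n,n,n)$, $n\ge1$, $A_\alpha=A_\beta=A_\delta=I_n$, $A_\gamma=F_n(p^s(t))$ with $p$ monic irreducible, $p(t)\ne t$. Type I: $d=(n,n,n,n)$, $n\ge1$, $A_\alpha=A_\beta=A_\delta=I_n$, $A_\gamma=J_n^+(0)$. Type II: $d=(n+1,n,n+1,n)$, $A_\alpha=I_{n+1}$, $A_\beta=I_n^{\leftarrow}$, $A_\gamma=I_n^{\downarrow}$, $A_\delta=I_n$. Type III: $d=(n+1,n,n,n)$, $A_\alpha=I_n^{\uparrow}$, $A_\beta=I_n$, $A_\gamma=I_n^{\downarrow}$, $A_\delta=I_n$. Type III$^\ast$: $d=(n,n+1,n+1,n+1)$, $A_\alpha=I_n^{\leftarrow}$, $A_\beta=I_{n+1}$, $A_\gamma=I_n^{\rightarrow}$, $A_\delta=I_{n+1}$. Type IV: $d=(n+1,n+1,n+1,n)$, $A_\alpha=A_\beta=I_{n+1}$, $A_\gamma=I_n^{\uparrow}$, $A_\delta=I_n^{\downarrow}$. Type IV$^\ast$: $d=(n,n,n,n+1)$, $A_\alpha=A_\beta=I_n$, $A_\gamma=I_n^{\leftarrow}$, $A_\delta=I_n^{\rightarrow}$. (For types II–IV$^\ast$, $n\ge 0$.) Notation: $I_n^{\uparrow}$ / $I_n^{\downarrow}$ is the $(n+1)\times n$ matrix obtained from $I_n$ by adjoining a zero row above / below; $I_n^{\rightarrow}$ / $I_n^{\leftarrow}$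 is the $n\times(n+1)$ matrix obtained from $I_n$ by adjoining a zero column on the right / left; for $n=0$ these are the formal $1\times 0$ matrix (map $0\to k$) resp. $0\times 1$ matrix (map $k\to 0$). $F_n(p^s(t))$ is the companion matrix of $p(t)^s$ ($n=s\deg p$); $J_n^+(0)$ is the $n\times n$ nilpotent Jordan block with $1$'s above the diagonal. *)

(* Defs.v *)
(* Representations of the quiver S: 3 -> 1, 3 -> 2, 4 -> 1, 4 -> 2
   (arrows alpha: 3->1, beta: 3->2, gamma: 4->1, delta: 4->2), over a field k,
   given by a dimension vector and the matrices of the linear maps in the
   standard bases (column-vector convention: f(x) = A *m x). *)
From HB Require Import structures.
From mathcomp Require Import all_boot all_order all_algebra.
From mathcomp Require Export qpoly.
Set Implicit Arguments. Unset Strict Implicit. Unset Printing Implicit Defensive.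
Import GRing.Theory.
Local Open Scope ring_scope.

Record rep (k : fieldType) := Rep {
  d1 : nat; d2 : nat; d3 : nat; d4 : nat;
  Aa : 'M[k]_(d1, d3);
  Ab : 'M[k]_(d2, d3);
  Ag : 'M[k]_(d1, d4);
  Ad : 'M[k]_(d2, d4) }.

Record endo (k : fieldType) (V : rep k) := Endo {
  l1 : 'M[k]_(d1 V); l2 : 'M[k]_(d2 V); l3 : 'M[k]_(d3 V); l4 : 'M[k]_(d4 V) }.

Definition is_endo (k : fieldType) (V : rep k) (e : endo V) : Prop :=
  [/\ l1 e *m Aa V = Aa V *m l3 e, l1 e *m Ag V = Ag V *m l4 e,
      l2 e *m Ab V = Ab V *m l3 e & l2 e *m Ad V = Ad V *m l4 e].

Definition endo_add (k : fieldType) (V : rep k) (e f : endo V) : endo V :=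
  Endo (l1 e + l1 f) (l2 e + l2 f) (l3 e + l3 f) (l4 e + l4 f).
Definition endo_mul (k : fieldType) (V : rep k) (e f : endo V) : endo V :=
  Endo (l1 e *m l1 f) (l2 e *m l2 f) (l3 e *m l3 f) (l4 e *m l4 f).
Definition endo_one (k : fieldType) (V : rep k) : endo V :=
  Endo 1%:M 1%:M 1%:M 1%:M.

Definition ring_iso_End (k : fieldType) (R : nzRingType) (V : rep k)
    (phi : R -> endo V) : Prop :=
  [/\ injective phi,
      forall e : endo V, is_endo e <-> exists r : R, phi r = e,
      forall a b : R, phi (a + b) = endo_add (phi a) (phi b),
      forall a b : R, phi (a * b) = endo_mul (phi a) (phi b)
    & phi 1 = endo_one V].

Definition End_iso (k : fieldType) (V : rep k) (R : nzRingType) : Prop :=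
  exists phi : R -> endo V, ring_iso_End phi.

Definition rep_iso (k : fieldType) (V W : rep k) : Prop :=
  exists (L1 : 'M[k]_(d1 W, d1 V)) (L2 : 'M[k]_(d2 W, d2 V))
         (L3 : 'M[k]_(d3 W, d3 V)) (L4 : 'M[k]_(d4 W, d4 V))
         (M1 : 'M[k]_(d1 V, d1 W)) (M2 : 'M[k]_(d2 V, d2 W))
         (M3 : 'M[k]_(d3 V, d3 W)) (M4 : 'M[k]_(d4 V, d4 W)),
    [/\ L1 *m M1 = 1%:M /\ M1 *m L1 = 1%:M, L2 *m M2 = 1%:M /\ M2 *m L2 = 1%:M,
        L3 *m M3 = 1%:M /\ M3 *m L3 = 1%:M, L4 *m M4 = 1%:M /\ M4 *m L4 = 1%:M
      & [/\ L1 *m Aa V = Aa W *m L3, L2 *m Ab V = Ab W *m L3,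
            L1 *m Ag V = Ag W *m L4 & L2 *m Ad V = Ad W *m L4]].

(* Indecomposability: V <> 0, and whenever V = U (+) W with U, W
   subrepresentations, U = 0 or W = 0.  A subspace of k^d is encoded as the
   row space of a d x d matrix; a row vector v is sent by f (matrix A) to
   v *m A^T. *)
Definition invariant (k : fieldType) (V : rep k) (U1 : 'M[k]_(d1 V))
    (U2 : 'M[k]_(d2 V)) (U3 : 'M[k]_(d3 V)) (U4 : 'M[k]_(d4 V)) : bool :=
  [&& (U3 *m (Aa V)^T <= U1)%MS, (U3 *m (Ab V)^T <= U2)%MS,
      (U4 *m (Ag V)^T <= U1)%MS & (U4 *m (Ad V)^T <= U2)%MS].

Definition compl_sub (k : fieldType) (d : nat) (U W : 'M[k]_d) : bool :=
  (U :&: W <= (0 : 'M[k]_d))%MS && (1%:M <= U + W)%MS.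

Definition indecomposable (k : fieldType) (V : rep k) : Prop :=
  (0 < d1 V + d2 V + d3 V + d4 V)%N /\
  forall U1 U2 U3 U4 W1 W2 W3 W4,
    @invariant k V U1 U2 U3 U4 -> @invariant k V W1 W2 W3 W4 ->
    compl_sub U1 W1 -> compl_sub U2 W2 -> compl_sub U3 W3 -> compl_sub U4 W4 ->
    (U1 == 0) && (U2 == 0) && (U3 == 0) && (U4 == 0) \/
    (W1 == 0) && (W2 == 0) && (W3 == 0) && (W4 == 0).

Definition I_up (k : fieldType) n : 'M[k]_(n.+1, n) :=
  \matrix_(i, j) ((i : nat) == j.+1)%:R.
Definition I_down (k : fieldType) n : 'M[k]_(n.+1, n) :=
  \matrix_(i, j) ((i : nat) == j)%:R.
Definition I_right (k : fieldType) n : 'M[k]_(n, n.+1) :=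
  \matrix_(i, j) ((i : nat) == j)%:R.
Definition I_left (k : fieldType) n : 'M[k]_(n, n.+1) :=
  \matrix_(i, j) ((j : nat) == i.+1)%:R.
Definition Jnil (k : fieldType) n : 'M[k]_n :=
  \matrix_(i, j) ((j : nat) == i.+1)%:R.

Definition type0 (k : fieldType) (q : {poly k}) : rep k :=
  let n := (size q).-1 in
  @Rep k n n n n 1%:M 1%:M (companionmx q) 1%:M.
Definition typeI (k : fieldType) n : rep k :=
  @Rep k n n n n 1%:M 1%:M (Jnil k n) 1%:M.
Definition typeII (k : fieldType) n : rep k :=
  @Rep k n.+1 n n.+1 n 1%:M (I_left k n) (I_down k n) 1%:M.
Definition typeIII (k : fieldType) n : rep k :=
  @Rep k n.+1 n n n (I_up k n) 1%:M (I_down k n) 1%:M.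
Definition typeIIIs (k : fieldType) n : rep k :=
  @Rep k n n.+1 n.+1 n.+1 (I_left k n) 1%:M (I_right k n) 1%:M.
Definition typeIV (k : fieldType) n : rep k :=
  @Rep k n.+1 n.+1 n.+1 n 1%:M 1%:M (I_up k n) (I_down k n).
Definition typeIVs (k : fieldType) n : rep k :=
  @Rep k n n n n.+1 1%:M 1%:M (I_left k n) (I_right k n).

(* Main.v *)
Require Import Defs.
From HB Require Import structures.
From mathcomp Require Import all_boot all_order all_algebra qpoly.
Import GRing.Theory.
Local Open Scope ring_scope.

Module CycM.
Import Pdiv.Ring Pdiv.RingMonic.


Lemma char_cast (k : fieldType) m m' (e : m = m') (A : 'M[k]_m) :
  char_poly (castmx (e, e) A) = char_poly A.
Proof. by case: m' / e; rewrite castmx_id. Qed.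

Section Cyc.
Variables (k : fieldType) (d : nat) (M : 'M[k]_d.+1) (q : {poly k}).
Hypotheses (qm : q \is monic) (qs : size q = d.+2)
  (hM : forall i j : 'I_d.+1, M i j = if i == d :> nat then - q`_j else (i.+1 == j)%:R).

Lemma mk_monic_q : mk_monic q = q.
Proof. by rewrite /mk_monic qs qm. Qed.

Lemma rowM_shift (i : 'I_d.+1) (h : (i.+1 < d.+1)%N) : row i M = delta_mx 0 (Ordinal h).
Proof.
apply/rowP => j; rewrite !mxE hM.
have -> : (i == d :> nat) = false by apply/eqP => E; move: h; rewrite E ltnn.
by rewrite eqxx -val_eqE /= eq_sym.
Qed.

Lemma row0_pow i (h : (i < d.+1)%N) : row 0 (M ^+ i) = delta_mx 0 (Ordinal h).
Proof.
elim: i h => [|i IH] h.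
  by rewrite expr0 row1; congr delta_mx; apply: val_inj.
rewrite exprSr -mulmxE row_mul (IH (ltnW h)) -rowE (rowM_shift (Ordinal (ltnW h)) h).
by [].
Qed.

Lemma row_comm (A : 'M[k]_d.+1) : A * M = M * A ->
  forall i (h : (i < d.+1)%N), row (Ordinal h) A = row 0 A *m M ^+ i.
Proof.
move=> cAM i h.
have cAX : GRing.comm A (M ^+ i) by apply: commrX.
have E : M ^+ i *m A = A *m M ^+ i by rewrite !mulmxE cAX.
by rewrite rowE -(row0_pow i h) rowE -mulmxA E mulmxA -rowE.
Qed.

Lemma horner_expand (r : {poly k}) : (size r <= d.+1)%N ->
  horner_mx M r = \sum_(i < d.+1) r`_i *: M ^+ i.
Proof.
move=> sr.
have Er : r = \poly_(i < d.+1) r`_i.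
  apply/polyP => j; rewrite coef_poly; case: ltnP => // hj.
  by rewrite nth_default // (leq_trans sr hj).
rewrite {1}Er poly_def linear_sum; apply: eq_bigr => i _.
by rewrite linearZ rmorphXn /= horner_mx_X.
Qed.

Lemma pow0E i (h : (i < d.+1)%N) j : (M ^+ i) 0 j = (i == j :> nat)%:R.
Proof.
have := row0_pow i h; move/rowP/(_ j); rewrite !mxE => ->.
by rewrite -val_eqE /= eq_sym.
Qed.

Lemma row0_horner (r : {poly k}) : (size r <= d.+1)%N ->
  row 0 (horner_mx M r) = \row_j r`_j.
Proof.
move=> sr; rewrite horner_expand //; apply/rowP => j.
rewrite !mxE summxE (bigD1 j) //= big1 ?addr0.
  by rewrite mxE pow0E // eqxx mulr1.
by move=> i ij; rewrite mxE pow0E // val_eqE (negPf ij) mulr0.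
Qed.

Lemma hornerq0 : horner_mx M q = 0.
Proof.
have e : (size q).-1 = d.+1 by rewrite qs.
have EM : M = castmx (e, e) (companionmx q).
  by apply/matrixP => i j; rewrite castmxE !mxE /= hM qs.
by rewrite -{1}(companionmxK qm) -(@char_cast _ _ _ e) -EM Cayley_Hamilton.
Qed.

Lemma horner_mod (r : {poly k}) : horner_mx M (rmodp r (mk_monic q)) = horner_mx M r.
Proof.
have mm := monic_mk_monic q.
rewrite {2}(rdivp_eq mm r) rmorphD rmorphM /=.
have -> : horner_mx M (mk_monic q) = 0 by rewrite mk_monic_q hornerq0.
by rewrite mulr0 add0r.
Qed.

Lemma qsize (a : {poly %/ q}) : (size (a : {poly k}) <= d.+1)%N.
Proof.
have h := size_mk_monic a; have h2 : size (mk_monic q) = d.+2 by rewrite mk_monic_q.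
by rewrite -ltnS -h2.
Qed.

Lemma phiD (a b : {poly %/ q}) :
  horner_mx M ((a + b : {poly %/ q}) : {poly k}) = horner_mx M a + horner_mx M b.
Proof. by rewrite poly_of_qpolyD rmorphD. Qed.

Lemma phiM (a b : {poly %/ q}) :
  horner_mx M ((a * b : {poly %/ q}) : {poly k}) = horner_mx M a *m horner_mx M b.
Proof. by rewrite poly_of_qpolyM horner_mod rmorphM. Qed.

Lemma phi1 : horner_mx M ((1 : {poly %/ q}) : {poly k}) = 1%:M.
Proof. by rewrite qpolyCE rmorph1. Qed.

Lemma phi_inj (a b : {poly %/ q}) : horner_mx M a = horner_mx M b -> a = b.
Proof.
move=> E; have := congr1 (row 0) E; rewrite !row0_horner ?qsize // => /rowP E2.
apply: val_inj; apply/polyP => j; case: (ltnP j d.+1) => hj.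
  by have := E2 (Ordinal hj); rewrite !mxE.
by rewrite !nth_default // (leq_trans (qsize _) hj).
Qed.

Lemma phi_comm (a : {poly %/ q}) : horner_mx M a *m M = M *m horner_mx M a.
Proof. exact: comm_horner_mx. Qed.

Lemma phi_surj (X : 'M[k]_d.+1) : X *m M = M *m X ->
  exists a : {poly %/ q}, horner_mx M a = X.
Proof.
move=> cXM.
pose r0 := \poly_(j < d.+1) X 0 (inord j).
have sr0 : (size r0 <= d.+1)%N by apply: size_poly.
have sr0' : (size r0 < size (mk_monic q))%N by rewrite mk_monic_q qs.
exists (in_qpoly q r0); rewrite in_qpoly_small //.
have cH : horner_mx M r0 *m M = M *m horner_mx M r0 by apply: comm_horner_mx.
apply/row_matrixP => i.
have -> : i = Ordinal (ltn_ord i) by apply: val_inj.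
rewrite (row_comm _ cXM i (ltn_ord i)) (row_comm _ cH i (ltn_ord i)).
congr (_ *m _); rewrite row0_horner //; apply/rowP => j.
by rewrite !mxE coef_poly ltn_ord inord_val.
Qed.

End Cyc.

End CycM.
Import CycM.


Lemma conj_iff (k : fieldType) (a b a' b' : nat) (A : 'M[k]_(a, b)) (A' : 'M[k]_(a', b'))
  (L : 'M[k]_(a', a)) (Mi : 'M[k]_(a, a')) (L' : 'M[k]_(b', b)) (M' : 'M[k]_(b, b')) :
  Mi *m L = 1%:M -> L *m Mi = 1%:M -> M' *m L' = 1%:M -> L' *m M' = 1%:M ->
  L *m A = A' *m L' -> forall (x : 'M[k]_a') (y : 'M[k]_b'),
  (Mi *m x *m L) *m A = A *m (M' *m y *m L') <-> x *m A' = A' *m y.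
Proof.
move=> hML hLM hML' hLM' EL x y.
have cancel2 (u v : 'M[k]_(a', b')) : Mi *m u *m L' = Mi *m v *m L' -> u = v.
  move=> H; have := congr1 (fun Z => L *m Z *m M') H => /=.
  by rewrite !mulmxA hLM !mul1mx -!mulmxA hLM' !mulmx1.
have EA2 : A *m M' = Mi *m A'.
  have : Mi *m (L *m A) *m M' = Mi *m (A' *m L') *m M' by rewrite EL.
  rewrite !mulmxA hML mul1mx -(mulmxA (Mi *m A') L' M') hLM' mulmx1 => ->.
  by [].
rewrite -(mulmxA (Mi *m x)) EL mulmxA !mulmxA EA2.
rewrite -[Mi *m x *m A']mulmxA -[Mi *m A' *m y]mulmxA.
by split => [/cancel2 | ->].
Qed.

Lemma transport (k : fieldType) (V W : rep k) (R : nzRingType) :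
  rep_iso V W -> End_iso W R -> End_iso V R.
Proof.
case=> L1 [L2 [L3 [L4 [M1 [M2 [M3 [M4 [[h1 h1'] [h2 h2'] [h3 h3'] [h4 h4'] [e1 e2 e3 e4]]]]]]]]].
case=> phi [inj hend hadd hmul hone].
pose T (e : endo W) : endo V := @Endo k V (M1 *m l1 e *m L1) (M2 *m l2 e *m L2)
  (M3 *m l3 e *m L3) (M4 *m l4 e *m L4).
pose U (f : endo V) : endo W := @Endo k W (L1 *m l1 f *m M1) (L2 *m l2 f *m M2)
  (L3 *m l3 f *m M3) (L4 *m l4 f *m M4).
have TU f : T (U f) = f.
  case: f => a b c d; rewrite /T /U /=.
  by rewrite !mulmxA h1' h2' h3' h4' !mul1mx -!mulmxA h1' h2' h3' h4' !mulmx1.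
have UT e : U (T e) = e.
  case: e => a b c d; rewrite /T /U /=.
  by rewrite !mulmxA h1 h2 h3 h4 !mul1mx -!mulmxA h1 h2 h3 h4 !mulmx1.
have Tend e : is_endo (T e) <-> is_endo e.
  rewrite /is_endo /=.
  have ca := @conj_iff _ _ _ _ _ _ _ _ _ _ _ h1' h1 h3' h3 e1 (l1 e) (l3 e).
  have cg := @conj_iff _ _ _ _ _ _ _ _ _ _ _ h1' h1 h4' h4 e3 (l1 e) (l4 e).
  have cb := @conj_iff _ _ _ _ _ _ _ _ _ _ _ h2' h2 h3' h3 e2 (l2 e) (l3 e).
  have cd := @conj_iff _ _ _ _ _ _ _ _ _ _ _ h2' h2 h4' h4 e4 (l2 e) (l4 e).
  split => [[a b c d]|[a b c d]]; split.
  - exact/ca. - exact/cg. - exact/cb. - exact/cd.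
  - exact/ca. - exact/cg. - exact/cb. - exact/cd.
exists (fun r => T (phi r)); split.
- by move=> a b /(congr1 U); rewrite !UT; apply: inj.
- move=> e; split => [He|[r <-]]; last by apply/Tend/hend; exists r.
  have : is_endo (U e) by apply/Tend; rewrite TU.
  by case/hend => r Hr; exists r; rewrite Hr TU.
- move=> a b; rewrite hadd /T /endo_add /=.
  by rewrite !mulmxDr !mulmxDl.
- move=> a b; rewrite hmul /T /endo_mul /=; congr Endo; rewrite !mulmxA.
  + by rewrite -(mulmxA (M1 *m l1 (phi a)) L1 M1) h1 mulmx1.
  + by rewrite -(mulmxA (M2 *m l2 (phi a)) L2 M2) h2 mulmx1.
  + by rewrite -(mulmxA (M3 *m l3 (phi a)) L3 M3) h3 mulmx1.
  + by rewrite -(mulmxA (M4 *m l4 (phi a)) L4 M4) h4 mulmx1.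
- by rewrite hone /T /endo_one /= !mulmx1 h1' h2' h3' h4'.
Qed.


Lemma End_cyc (k : fieldType) m (M : 'M[k]_m) (q : {poly k}) :
  (0 < m)%N -> q \is monic -> size q = m.+1 ->
  (forall i j : 'I_m, M i j = if i == m.-1 :> nat then - q`_j else (i.+1 == j)%:R) ->
  End_iso (@Rep k m m m m 1%:M 1%:M M 1%:M) {poly %/ q}.
Proof.
case: m M => [//|d] M _ qm qs hM.
exists (fun r : {poly %/ q} => let P := horner_mx M (r : {poly k}) in @Endo k (@Rep k _ _ _ _ 1%:M 1%:M M 1%:M) P P P P).
split.
- by move=> a b [E _ _ _]; apply: (phi_inj _ _ _ _ qm qs hM).
- case=> a b c e; split.
    rewrite /is_endo /= !mulmx1 !mul1mx => -[e1 e2 e3 e4]; subst.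
    have [r Hr] := phi_surj _ _ _ _ qm qs hM _ e2.
    by exists r; rewrite /= Hr.
  case=> r [<- <- <- <-]; rewrite /is_endo /= !mulmx1 !mul1mx; split => //.
  exact: phi_comm.
- by move=> a b; rewrite /endo_add /= phiD.
- by move=> a b; rewrite /endo_mul /= (phiM _ _ _ _ qm qs hM).
- by rewrite /endo_one /= phi1.
Qed.

Lemma End0 (k : fieldType) (p : {poly k}) (s : nat) :
  p \is monic -> irreducible_poly p -> (0 < s)%N ->
  End_iso (type0 (p ^+ s)) {poly %/ p ^+ s}.
Proof.
move=> pm [sp _] s0.
have qm : p ^+ s \is monic by apply: monic_exp.
have hpos : (0 < (size (p ^+ s)).-1)%N.
  by rewrite size_exp muln_gt0 s0 andbT -ltnS prednK // ltnW.
have qs : size (p ^+ s) = ((size (p ^+ s)).-1).+1 by rewrite prednK // ltnW // -subn_gt0 subn1.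
rewrite /type0 /=; refine (End_cyc _ _ _ _ hpos qm qs _).
by move=> i j; rewrite mxE.
Qed.

Lemma Jnil_comp (k : fieldType) n (i j : 'I_n) :
  Jnil k n i j = if i == n.-1 :> nat then - ('X^n : {poly k})`_j else (i.+1 == j)%:R.
Proof.
rewrite mxE coefXn; case: ifP => [/eqP hi|_]; last by rewrite eq_sym.
have -> : (j == n :> nat) = false by apply/negbTE; rewrite neq_ltn ltn_ord.
have -> : (j == i.+1 :> nat) = false.
  by apply/negbTE; rewrite hi; case: n i j hi => [[]//|n] i j _ /=; rewrite neq_ltn ltn_ord.
by rewrite /= oppr0.
Qed.

Lemma EndI (k : fieldType) n : (0 < n)%N -> End_iso (typeI k n) {poly %/ ('X ^+ n : {poly k})}.
Proof.
move=> n0; refine (End_cyc _ _ _ _ n0 (monicXn _ n) (size_polyXn _ n) _).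
exact: Jnil_comp.
Qed.


Lemma sum_pick1 (k : fieldType) m (f : 'I_m -> k) (l0 : 'I_m) :
  \sum_(l < m) ((l : nat) == l0)%:R * f l = f l0.
Proof.
rewrite (bigD1 l0) //= eqxx mul1r big1 ?addr0 // => l hl.
by rewrite val_eqE (negPf hl) mul0r.
Qed.

Lemma sum_pick0 (k : fieldType) m (f : 'I_m -> k) (t : nat) : (m <= t)%N ->
  \sum_(l < m) ((l : nat) == t)%:R * f l = 0.
Proof.
move=> ht; apply: big1 => l _.
have -> : (l == t :> nat) = false.
  by apply/negbTE; rewrite neq_ltn (leq_trans (ltn_ord l) ht).
by rewrite mul0r.
Qed.

Lemma hcomm (k : fieldType) m m' (A : 'M[k]_(m.+1, m'.+1)) (B : 'M[k]_m'.+1) (C : 'M[k]_m.+1)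
  (r : {poly k}) : A *m B = C *m A -> A *m horner_mx B r = horner_mx C r *m A.
Proof.
move=> hABC; elim/poly_ind: r => [|r c IH].
  by rewrite !rmorph0 mulmx0 mul0mx.
rewrite !rmorphD !rmorphM /= !horner_mx_X !horner_mx_C -!mulmxE.
rewrite mulmxDr mulmxDl scalar_mxC; congr (_ + _).
by rewrite mulmxA IH -!mulmxA hABC.
Qed.

Lemma DtD (k : fieldType) n : (I_down k n)^T *m I_down k n = 1%:M.
Proof.
apply/matrixP => i j; rewrite !mxE.
under eq_bigr do rewrite !mxE.
pose i' : 'I_n.+1 := widen_ord (leqnSn n) i.
by rewrite (@sum_pick1 _ _ (fun l : 'I_n.+1 => ((l : nat) == j)%:R) i').
Qed.

Lemma DL (k : fieldType) n : I_down k n *m I_left k n = Jnil k n.+1.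
Proof.
apply/matrixP => i j; rewrite !mxE.
under eq_bigr do rewrite !mxE eq_sym.
case: (ltnP i n) => hi.
  by rewrite (@sum_pick1 _ _ (fun l : 'I_n => ((j : nat) == l.+1)%:R) (Ordinal hi)).
rewrite sum_pick0 //.
have -> : (j == i.+1 :> nat) = false.
  by apply/negbTE; rewrite neq_ltn (leq_trans (ltn_ord j)) // ltnS.
by [].
Qed.

Lemma LD (k : fieldType) n : I_left k n *m I_down k n = Jnil k n.
Proof.
apply/matrixP => i j; rewrite !mxE.
under eq_bigr do rewrite !mxE.
pose i' : 'I_n.+1 := Ordinal (ltn_ord i : (i.+1 < n.+1)%N).
rewrite (@sum_pick1 _ _ (fun l : 'I_n.+1 => ((l : nat) == j)%:R) i') /=.
by rewrite eq_sym.
Qed.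

Lemma keyII0 (k : fieldType) n (r : {poly k}) :
  I_down k n *m ((I_down k n)^T *m horner_mx (Jnil k n.+1) r *m I_down k n)
    = horner_mx (Jnil k n.+1) r *m I_down k n /\
  ((I_down k n)^T *m horner_mx (Jnil k n.+1) r *m I_down k n) *m I_left k n
    = I_left k n *m horner_mx (Jnil k n.+1) r.
Proof.
case: n r => [|n'] r.
  by split; apply/matrixP => i j; [case: j => ? ? | case: i => ? ?].
have c1 : I_down k n'.+1 *m Jnil k n'.+1 = Jnil k n'.+2 *m I_down k n'.+1.
  by rewrite -(LD k n'.+1) -(DL k n'.+1) mulmxA.
have c2 : I_left k n'.+1 *m Jnil k n'.+2 = Jnil k n'.+1 *m I_left k n'.+1.
  by rewrite -(LD k n'.+1) -(DL k n'.+1) mulmxA.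
have h1 := hcomm _ _ _ _ _ _ r c1.
have h2 := hcomm _ _ _ _ _ _ r c2.
have e : (I_down k n'.+1)^T *m horner_mx (Jnil k n'.+2) r *m I_down k n'.+1
    = horner_mx (Jnil k n'.+1) r by rewrite -mulmxA -h1 mulmxA DtD mul1mx.
by rewrite e h1 h2.
Qed.

Section TII.
Variables (k : fieldType) (n : nat).
Local Notation N := (Jnil k n.+1).
Local Notation D := (I_down k n).
Local Notation L := (I_left k n).
Local Notation P r := (horner_mx N r).
Local Notation P2 r := ((I_down k n)^T *m horner_mx N r *m I_down k n).

Lemma keyII (r : {poly k}) : D *m P2 r = P r *m D /\ P2 r *m L = L *m P r.
Proof. exact: keyII0. Qed.

Lemma EndII : End_iso (typeII k n) {poly %/ ('X ^+ n.+1 : {poly k})}.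
Proof.
have qm := monicXn k n.+1.
have qs := size_polyXn k n.+1.
have hM := @Jnil_comp k n.+1.
exists (fun r : {poly %/ ('X ^+ n.+1 : {poly k})} =>
  @Endo k (typeII k n) (P (r : {poly k})) (P2 (r : {poly k})) (P (r : {poly k})) (P2 (r : {poly k}))).
split.
- by move=> a b [E _ _ _]; apply: (phi_inj _ _ _ _ qm qs hM).
- case=> a b c e; split.
    rewrite /is_endo /= !mulmx1 !mul1mx => -[e1 e2 e3 e4]; subst.
    have cN : c *m N = N *m c by rewrite -DL mulmxA e2 -[D *m e *m L]mulmxA e3 mulmxA.
    have [r Hr] := phi_surj _ _ _ _ qm qs hM _ cN.
    exists r; rewrite /= Hr; congr Endo; rewrite -mulmxA e2 mulmxA DtD mul1mx //.
  case=> r [<- <- <- <-]; rewrite /is_endo /= !mulmx1 !mul1mx.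
  have [h1 h2] := keyII r.
  by split.
- move=> a b; rewrite /endo_add /= phiD; congr Endo.
  + by rewrite mulmxDr mulmxDl.
  + by rewrite mulmxDr mulmxDl.
- move=> a b; rewrite /endo_mul /= (phiM _ _ _ _ qm qs hM); congr Endo.
  + have [h1 _] := keyII b.
    by rewrite -[in RHS]mulmxA h1 !mulmxA.
  + have [h1 _] := keyII b.
    by rewrite -[in RHS]mulmxA h1 !mulmxA.
- rewrite /endo_one /= horner_mx_C; congr Endo.
  + by rewrite mulmx1 DtD.
  + by rewrite mulmx1 DtD.
Qed.
End TII.


Section Kron.
Variables (k : fieldType) (n : nat) (X : 'M[k]_n.+1) (Y : 'M[k]_n).
Hypotheses (hU : X *m I_up k n = I_up k n *m Y) (hD : X *m I_down k n = I_down k n *m Y).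

Lemma sumR m (f : 'I_m -> k) (l0 : 'I_m) t : val l0 = t ->
  \sum_(l < m) f l * ((l : nat) == t)%:R = f l0.
Proof.
move=> <-; rewrite (bigD1 l0) //= eqxx mulr1 big1 ?addr0 // => l hl.
by rewrite val_eqE (negPf hl) mulr0.
Qed.

Lemma sumL m (f : 'I_m -> k) (l0 : 'I_m) t : val l0 = t ->
  \sum_(l < m) (t == (l : nat))%:R * f l = f l0.
Proof.
move=> <-; rewrite (bigD1 l0) //= eqxx mul1r big1 ?addr0 // => l hl.
by rewrite eq_sym val_eqE (negPf hl) mul0r.
Qed.

Lemma kA (i j : 'I_n) : X (lift ord0 i) (lift ord0 j) = Y i j.
Proof.
have := congr1 (fun Z : 'M[k]_(n.+1, n) => Z (lift ord0 i) j) hU => /=; rewrite !mxE.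
under eq_bigr do rewrite mxE.
rewrite (@sumR _ (fun l => X (lift ord0 i) l) (lift ord0 j)) // => ->.
under eq_bigr do rewrite mxE.
by rewrite (@sumL _ (fun l => Y l j) i) //.
Qed.

Lemma kB (i j : 'I_n) : X (widen_ord (leqnSn n) i) (widen_ord (leqnSn n) j) = Y i j.
Proof.
have := congr1 (fun Z : 'M[k]_(n.+1, n) => Z (widen_ord (leqnSn n) i) j) hD => /=; rewrite !mxE.
under eq_bigr do rewrite mxE.
rewrite (@sumR _ (fun l => X (widen_ord (leqnSn n) i) l) (widen_ord (leqnSn n) j)) // => ->.
under eq_bigr do rewrite mxE.
by rewrite (@sumL _ (fun l => Y l j) i) //.
Qed.

Lemma kC (j : 'I_n) : X ord0 (lift ord0 j) = 0.
Proof.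
have := congr1 (fun Z : 'M[k]_(n.+1, n) => Z ord0 j) hU => /=; rewrite !mxE.
under eq_bigr do rewrite mxE.
rewrite (@sumR _ (fun l => X ord0 l) (lift ord0 j)) // => ->.
by apply: big1 => l _; rewrite mxE mul0r.
Qed.

Lemma kD (j : 'I_n) : X ord_max (widen_ord (leqnSn n) j) = 0.
Proof.
have := congr1 (fun Z : 'M[k]_(n.+1, n) => Z ord_max j) hD => /=; rewrite !mxE.
under eq_bigr do rewrite mxE.
rewrite (@sumR _ (fun l => X ord_max l) (widen_ord (leqnSn n) j)) // => ->.
apply: big1 => l _; rewrite mxE.
have -> : (n == l :> nat) = false by apply/negbTE; rewrite neq_ltn ltn_ord orbT.
by rewrite mul0r.
Qed.
Lemma kron : X = (X 0 0)%:M /\ Y = (X 0 0)%:M.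
Proof.
pose x a b := X (inord a) (inord b).
have eL a (ha : (a < n)%N) : inord a.+1 = lift ord0 (Ordinal ha) :> 'I_n.+1.
  by apply: val_inj; rewrite /= inordK.
have eW a (ha : (a < n)%N) : inord a = widen_ord (leqnSn n) (Ordinal ha) :> 'I_n.+1.
  by apply: val_inj; rewrite /= inordK // ltnW.
have H1 a b : (a < n)%N -> (b < n)%N -> x a.+1 b.+1 = x a b.
  by move=> ha hb; rewrite /x (eL a ha) (eL b hb) (eW a ha) (eW b hb) kA kB.
have H2 b : (b < n)%N -> x 0%N b.+1 = 0.
  move=> hb; rewrite /x (eL b hb).
  have -> : inord 0 = ord0 :> 'I_n.+1 by apply: val_inj; rewrite /= inordK.
  exact: kC.
have H3 b : (b < n)%N -> x n b = 0.
  move=> hb; rewrite /x (eW b hb).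
  have -> : inord n = ord_max :> 'I_n.+1 by apply: val_inj; rewrite /= inordK.
  exact: kD.
have shift t a b : (a + t <= n)%N -> (b + t <= n)%N -> x (a + t)%N (b + t)%N = x a b.
  elim: t => [|t IH] ha hb; first by rewrite !addn0.
  rewrite !addnS in ha hb *; rewrite H1 // IH // ltnW //.
have main a b : (a <= n)%N -> (b <= n)%N -> x a b = (a == b)%:R * x 0%N 0%N.
  move=> ha hb; case: (ltngtP a b) => hab.
  - have hp : (0 < b - a)%N by rewrite subn_gt0.
    have hba : (b - a <= n)%N := leq_trans (leq_subr a b) hb.
    have := shift a 0%N (b - a)%N; rewrite add0n (subnK (ltnW hab)) => -> //.
    rewrite -(prednK hp) H2 ?mul0r //.
    by rewrite prednK.
  - have hna : (b + (n - a) < n)%N by rewrite -{2}(subnKC ha) ltn_add2r.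
    have := shift (n - a)%N a b; rewrite subnKC // => <- //; last exact: ltnW.
    by rewrite H3 ?mul0r.
  - rewrite hab mul1r.
    by have := shift b 0%N 0%N; rewrite !add0n => ->.
have e0 : inord 0 = 0 :> 'I_n.+1 by apply: val_inj; rewrite /= inordK.
have EX : X = (X 0 0)%:M.
  apply/matrixP => i j; rewrite mxE.
  have := main i j (ltn_ord i) (ltn_ord j); rewrite /x !inord_val e0 => ->.
  by rewrite mulr_natl.
split => //; apply/matrixP => i j; rewrite -kB {1}EX !mxE.
by rewrite -!val_eqE.
Qed.
End Kron.


Lemma scal_inj (k : fieldType) m (a b : k) : (0 < m)%N -> a%:M = b%:M :> 'M[k]_m -> a = b.
Proof.
case: m => // m _ /matrixP /(_ 0 0); rewrite !mxE eqxx !mulr1n.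
by [].
Qed.

Lemma End_scalar (k : fieldType) (V : rep k) :
  (0 < d1 V)%N || (0 < d2 V)%N || (0 < d4 V)%N ->
  (forall e : endo V, is_endo e -> exists c : k, e = @Endo k V c%:M c%:M c%:M c%:M) ->
  End_iso V k.
Proof.
move=> hpos H.
exists (fun c : k => @Endo k V c%:M c%:M c%:M c%:M); split.
- move=> a b [E1 E2 _ E4].
  case/orP: hpos => [/orP[]|] h; [exact: scal_inj h E1 | exact: scal_inj h E2 | exact: scal_inj h E4].
- move=> e; split; first by move/H => [c ->]; exists c.
  by move=> [c <-]; split; rewrite scalar_mxC.
- by move=> a b; rewrite /endo_add /= !raddfD.
- by move=> a b; rewrite /endo_mul /= !scalar_mxM.
- by [].
Qed.

Lemma kronT (k : fieldType) n (X : 'M[k]_n) (Y : 'M[k]_n.+1) :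
  X *m I_left k n = I_left k n *m Y -> X *m I_right k n = I_right k n *m Y ->
  X = (Y 0 0)%:M /\ Y = (Y 0 0)%:M.
Proof.
move=> h1 h2.
have tU : (I_left k n)^T = I_up k n by apply/matrixP => i j; rewrite !mxE.
have tD : (I_right k n)^T = I_down k n by apply/matrixP => i j; rewrite !mxE eq_sym.
have hU : Y^T *m I_up k n = I_up k n *m X^T by rewrite -tU -!trmx_mul h1.
have hD : Y^T *m I_down k n = I_down k n *m X^T by rewrite -tD -!trmx_mul h2.
have [EY EX] := kron _ _ _ _ hU hD.
rewrite mxE in EY EX.
split; first by rewrite -[LHS]trmxK EX tr_scalar_mx.
by rewrite -[LHS]trmxK EY tr_scalar_mx.
Qed.

Lemma EndIII (k : fieldType) n : End_iso (typeIII k n) k.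
Proof.
apply: End_scalar => //.
case=> a b c d; rewrite /is_endo /= !mulmx1 !mul1mx => -[e1 e2 e3 e4].
subst; have [Ea Ec] := kron _ _ _ _ e1 e2.
by exists (a 0 0); rewrite -Ea -Ec.
Qed.

Lemma EndIV (k : fieldType) n : End_iso (typeIV k n) k.
Proof.
apply: End_scalar => //.
case=> a b c d; rewrite /is_endo /= !mulmx1 !mul1mx => -[e1 e2 e3 e4].
rewrite -e3 in e1; rewrite -e1 in e4.
have [Ea Ed] := kron _ _ _ _ e2 e4.
by exists (a 0 0); rewrite -e3 -e1 -Ea -Ed.
Qed.

Lemma EndIIIs (k : fieldType) n : End_iso (typeIIIs k n) k.
Proof.
apply: End_scalar; first by rewrite /= orbT.
case=> a b c d; rewrite /is_endo /= !mulmx1 !mul1mx => -[e1 e2 e3 e4].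
rewrite -e3 in e1; rewrite -e4 in e2.
have [Ea Eb] := kronT _ _ _ _ e1 e2.
by exists (b 0 0); rewrite -e3 -e4 -Ea -Eb.
Qed.

Lemma EndIVs (k : fieldType) n : End_iso (typeIVs k n) k.
Proof.
apply: End_scalar; first by rewrite /= orbT.
case=> a b c d; rewrite /is_endo /= !mulmx1 !mul1mx => -[e1 e2 e3 e4].
rewrite -e3 in e1; rewrite -e1 in e4.
have [Ea Ed] := kronT _ _ _ _ e2 e4.
by exists (d 0 0); rewrite -e3 -e1; congr Endo.
Qed.

Theorem theorem3p1 (k : fieldType) (V : rep k) :
  indecomposable V ->
  (* (1) type 0 *)
  (forall (p : {poly k}) (s : nat),
      p \is monic -> irreducible_poly p -> p != 'X -> (0 < s)%N ->
      rep_iso V (type0 (p ^+ s)) -> End_iso V {poly %/ p ^+ s}) /\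
  (* (2) type I *)
  (forall n : nat, (0 < n)%N ->
      rep_iso V (typeI k n) -> End_iso V {poly %/ ('X ^+ n : {poly k})}) /\
  (* (3) type II *)
  (forall n : nat,
      rep_iso V (typeII k n) -> End_iso V {poly %/ ('X ^+ n.+1 : {poly k})}) /\
  (* (4) types III, IV, III*, IV* *)
  (forall n : nat,
      rep_iso V (typeIII k n) \/ rep_iso V (typeIV k n) \/
      rep_iso V (typeIIIs k n) \/ rep_iso V (typeIVs k n) ->
      End_iso V k).
Proof.
move=> _; split; [|split; [|split]].
- move=> p s pm pirr _ s0 iso.
  exact: (transport _ _ _ _ iso (End0 _ _ _ pm pirr s0)).
- move=> n n0 iso; exact: (transport _ _ _ _ iso (EndI _ _ n0)).
- move=> n iso; exact: (transport _ _ _ _ iso (EndII k n)).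
- move=> n [iso|[iso|[iso|iso]]].
  + exact: (transport _ _ _ _ iso (EndIII k n)).
  + exact: (transport _ _ _ _ iso (EndIV k n)).
  + exact: (transport _ _ _ _ iso (EndIIIs k n)).
  + exact: (transport _ _ _ _ iso (EndIVs k n)).
Qed.
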